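(* Let $k\ge 2$, let $\lambda_1,\ldots,\lambda_k$ be nonzero integers with $\gcd(\lambda_1,\ldots,\lambda_k)=1$, and $g_i=\gcd(\lambda_j:j\ne i)$. Let $A\subset\mathbb{Z}$ be a finite reduced set. For each $1\le i\le k$ write $A$ as the disjoint union $A=\bigcup_{j=1}^{m_i}A_{ij}$ of its nonempty intersections with residue classes mod $g_i$, where $A_{ij}=a_{ij}+g_i\cdot A'_{ij}$ with $0\le a_{ij}<g_i$ and $A'_{ij}\subset\mathbb{Z}$. Fix $1\le i\le k$ and $1\le j\le m_i$. Then either $A'_{ij}$ is fully distributed mod $g_i$, or $$\big|\lambda_1\cdot A+\cdots+\lambda_{i-1}\cdot A+\lambda_i\cdot A_{ij}+\lambda_{i+1}\cdot A+\cdots+\lambda_k\cdot A\big|\ \ge\ |\lambda_1\cdot A_{ij}+\cdots+\lambda_k\cdot A_{ij}|+\min_{1\le w\le m_i}|A_{iw}|.$$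
   Context: For an integer $d$ and a finite set $A$, $d\cdot A=\{da:a\in A\}$, $x+A=\{x+a:a\in A\}$; sums of sets are Minkowski sums. A set $A\subset\mathbb{Z}$ is fully distributed (FD) mod $q$ if it intersects every residue class mod $q$. A finite set $A\subset\mathbb{Z}$ is reduced if it is not contained in any proper infinite arithmetic progression, i.e. there is no $a\in\mathbb{Z}$ and integer $d\ge 2$ with $A\subset a+d\mathbb{Z}$ (equivalently, $|A|\ge2$ and the differences of elements of $A$ have gcd 1). *)

(* Defs.v *)
(* Finite sets of integers are represented by sequences
   (duplicates allowed); membership is seq membership and the cardinality
   of the set is the number of distinct elements. *)
From mathcomp Require Import all_boot all_order all_algebra.
Set Implicit Arguments. Unset Strict Implicit. Unset Printing Implicit Defensive.
Import Order.TTheory GRing.Theory Num.Theory.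
Local Open Scope ring_scope.

Definition card_set (s : seq int) : nat := size (undup s).

Definition dil (d : int) (A : seq int) : seq int := [seq d * a | a <- A].

Definition sumset (A B : seq int) : seq int := [seq a + b | a <- A, b <- B].

Definition lin_sumset (k : nat) (lam : 'I_k -> int) (B : 'I_k -> seq int)
  : seq int := \big[sumset/[:: 0]]_(t < k) dil (lam t) (B t).

Definition gcd_all (k : nat) (lam : 'I_k -> int) : int :=
  \big[gcdz/0]_(t < k) lam t.

Definition gcd_but (k : nat) (lam : 'I_k -> int) (i : 'I_k) : int :=
  \big[gcdz/0]_(t < k | t != i) lam t.

Definition fully_distributed (A : seq int) (q : int) : Prop :=
  forall r : int, exists2 a, a \in A & (a == r %[mod q])%Z.

Definition reduced (A : seq int) : Prop :=
  ~ (exists (a d : int), 2 <= d /\ forall x, x \in A -> (d %| x - a)%Z).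

Definition res_class (A : seq int) (g r : int) : seq int :=
  [seq a <- A | (a %% g)%Z == r].

Definition res_class' (A : seq int) (g r : int) : seq int :=
  [seq ((a - r) %/ g)%Z | a <- res_class A g r].

(* min over the nonempty residue classes A_w mod g of |A_w|
   (the default value card_set A is an upper bound of all terms, and the
   minimum ranges over a nonempty list when A is nonempty) *)
Definition min_class_size (A : seq int) (g : int) : nat :=
  \big[minn/card_set A]_(r <- undup [seq (a %% g)%Z | a <- A])
     card_set (res_class A g r).

(* Main.v *)
Require Import Defs.
From mathcomp Require Import all_boot all_order all_algebra.
From mathcomp Require Import ring zify.
From Stdlib Require Import Classical.
Import Order.TTheory GRing.Theory Num.Theory.
Local Open Scope ring_scope.

Lemma mem_lin k (lam : 'I_k -> int) (B : 'I_k -> seq int) x :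
  x \in lin_sumset lam B <->
  exists f : 'I_k -> int, (forall t, f t \in B t) /\ x = \sum_(t < k) lam t * f t.
Proof.
elim: k lam B x => [|k IH] lam B x.
  rewrite /lin_sumset big_ord0 inE; split.
    by move/eqP=> ->; exists (fun _ => 0); split=> [[]//|]; rewrite big_ord0.
  by case=> f [_ ->]; rewrite big_ord0 eqxx.
rewrite /lin_sumset (big_ord_recl (op:=sumset)) /=; split.
  case/allpairsP=> [[u v] /= [hu hv ->]].
  have /IH [f' [hf' ->]] := hv.
  case/mapP: hu => w hw ->.
  exists (fun t : 'I_k.+1 => oapp f' w (unlift ord0 t)); split.
    move=> t; case: unliftP => /= [j ->|-> //]; exact: hf'.
  rewrite big_ord_recl /= unlift_none /=; congr (_ + _).
  by apply: eq_bigr => j _ /=; rewrite liftK.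
case=> f [hf ->]; rewrite big_ord_recl /=; apply/allpairsP.
exists (lam ord0 * f ord0,
  \sum_(i < k) lam (lift ord0 i) * f (lift ord0 i)) => /=; split=> //.
  by apply: map_f.
by apply/IH; exists (fun t => f (lift ord0 t)).
Qed.

Lemma gcd_big_dvd (I : eqType) (r : seq I) (P : pred I) (F : I -> int) x :
  x \in r -> P x -> (\big[gcdz/0]_(y <- r | P y) F y %| F x)%Z.
Proof.
elim: r => [//|a r IH]; rewrite inE big_cons => /orP [/eqP <-|hx] Px.
  by rewrite Px dvdz_gcdl.
case: (P a); last exact: IH.
exact: dvdz_trans (dvdz_gcdr _ _) (IH hx Px).
Qed.

Lemma dvd_gcd_big (I : Type) (r : seq I) (P : pred I) (F : I -> int) d :
  (forall x, P x -> (d %| F x)%Z) -> (d %| \big[gcdz/0]_(y <- r | P y) F y)%Z.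
Proof.
move=> h; apply: (big_ind (fun z => (d %| z)%Z)); [exact: dvdz0 | | exact: h].
by move=> a b ha hb; rewrite dvdz_gcd ha hb.
Qed.

Lemma ideal_gcd (Pr : int -> Prop) :
  Pr 0 -> (forall a b, Pr a -> Pr b -> Pr (a + b)) ->
  (forall a m, Pr a -> Pr (a * m)) ->
  forall a b, Pr a -> Pr b -> Pr (gcdz a b).
Proof.
move=> h0 hD hM a b ha hb; case: (Bezoutz a b) => u [v <-].
by rewrite mulrC [v * b]mulrC; apply: hD; apply: hM.
Qed.

Lemma ideal_big (Pr : int -> Prop) (I : Type) (r : seq I) (P : pred I) (F : I -> int) :
  Pr 0 -> (forall a b, Pr a -> Pr b -> Pr (a + b)) ->
  (forall a m, Pr a -> Pr (a * m)) ->
  (forall x, P x -> Pr (F x)) -> Pr (\big[gcdz/0]_(y <- r | P y) F y).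
Proof.
move=> h0 hD hM hF; apply: (big_ind Pr); [exact: h0 | exact: ideal_gcd | exact: hF].
Qed.

Lemma bigmin_le (I : eqType) (r : seq I) (F : I -> nat) d x :
  x \in r -> (\big[minn/d]_(y <- r) F y <= F x)%N.
Proof.
elim: r => [//|a r IH]; rewrite inE big_cons => /orP [/eqP <-|hx].
  exact: geq_minl.
exact: leq_trans (geq_minr _ _) (IH hx).
Qed.

Theorem mainTheorem3 (k : nat) (lam : 'I_k -> int) (A : seq int)
  (i : 'I_k) (r : int) :
  (2 <= k)%N ->
  (forall t, lam t != 0) ->
  gcd_all lam = 1 ->
  reduced A ->
  (* r = a_{ij}: the residue (in [0, g_i)) of a nonempty class of A mod g_i *)
  0 <= r < gcd_but lam i ->
  has (fun a => (a %% gcd_but lam i)%Z == r) A ->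
  fully_distributed (res_class' A (gcd_but lam i) r) (gcd_but lam i)
  \/
  (card_set (lin_sumset lam (fun t => if t == i then res_class A (gcd_but lam i) r else A))
   >= card_set (lin_sumset lam (fun _ => res_class A (gcd_but lam i) r))
      + min_class_size A (gcd_but lam i))%N.
Proof.
move=> hk hlam hgcd hred /andP[r0 rg] hasB.
set g := gcd_but lam i.
set B := res_class A g r.
set B' := res_class' A g r.
have memB x : x \in B -> x \in A /\ (x %% g)%Z = r.
  by rewrite mem_filter => /andP[/eqP -> ->].
have [t0 ht0] : exists t0 : 'I_k, t0 != i.
  have hlt : ((if val i == 0%N then 1 else 0) < k)%N by case: ifP; lia.
  exists (Ordinal hlt); apply/eqP => /(congr1 val) /=.
  by case: ifP => [/eqP -> //|/eqP h /esym].
have gdvd t : t != i -> (g %| lam t)%Z.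
  move=> ht; apply: gcd_big_dvd => //; exact: mem_index_enum.
have gne0 : g != 0.
  apply/eqP => g0; have := gdvd t0 ht0; rewrite g0 dvd0z.
  by rewrite (negbTE (hlam t0)).
have cop : gcdz (lam i) g = 1.
  have : (gcdz (lam i) g %| gcd_all lam)%Z.
    apply: dvd_gcd_big => t _; case: (eqVneq t i) => [->|ht].
      exact: dvdz_gcdl.
    exact: dvdz_trans (dvdz_gcdr _ _) (gdvd t ht).
  by rewrite hgcd dvdz1 /gcdz absz_nat => /eqP ->.
pose mu t := (lam t %/ g)%Z.
have lamE t : t != i -> lam t = mu t * g by move=> ht; rewrite divzK // gdvd.
have Bdiv x : x \in B -> (g %| x - r)%Z.
  case/memB => _ hr; rewrite {1}(divz_eq x g) hr addrK.
  exact: dvdz_mull (dvdzz _).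
have BE x : x \in B -> x - r = ((x - r) %/ g)%Z * g by move/Bdiv/divzK.
pose yy x := ((x - r) %/ g)%Z.
have [Bad|nBad] := classic (exists t1 : 'I_k, t1 != i /\ exists2 b, b \in B &
   exists2 a, a \in A & all (fun y' => ~~ (g %| lam i * yy b + mu t1 * (a - r) - lam i * y')%Z) B').
  right.
  case: Bad => t1 [ht1 [b hb [a ha hall]]].
  set S := lin_sumset lam (fun t => if t == i then B else A).
  set T := lin_sumset lam (fun _ => B).
  pose w := (a %% g)%Z.
  pose Aw := res_class A g w.
  pose h x t := if t == t1 then x else b.
  pose z x := \sum_(t < k) lam t * h x t.
  pose N := map z Aw.
  have TS : {subset T <= S}.
    move=> x /mem_lin [f [hf ->]]; apply/mem_lin; exists f; split=> // t.
    by case: ifP => _ //; case/memB: (hf t).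
  have NS : {subset N <= S}.
    move=> x /mapP [x0 hx0 ->]; apply/mem_lin; exists (h x0); split=> // t.
    rewrite /h; case: (eqVneq t i) => [->|hti]; first by rewrite (eq_sym i t1) (negbTE ht1).
    case: ifP => _; first by move: hx0; rewrite mem_filter => /andP[].
    by case/memB: hb.
  have zE x : z x = lam t1 * x + \sum_(t < k | t != t1) lam t * b.
    rewrite /z (bigD1 t1) //= /h eqxx; congr (_ + _).
    by apply: eq_bigr => t /negbTE ->.
  have zinj : injective z.
    move=> x x'; rewrite !zE => /addIr /mulfI; exact.
  have NT x : x \in N -> x \notin T.
    case/mapP => x0 hx0 ->; apply/negP => /mem_lin [f [hf hzf]].
    have fi : f i \in B := hf i.
    have [x0A x0w] : x0 \in A /\ (x0 %% g)%Z = w.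
      by move: hx0; rewrite mem_filter => /andP[/eqP -> ->].
    pose q t := if t == i then lam i * (yy b - yy (f i)) else mu t * (h x0 t - f t).
    have hq t : lam t * (h x0 t - f t) = g * q t.
      rewrite /q; case: (eqVneq t i) => [->|hti].
        have -> : h x0 i = b by rewrite /h (eq_sym i t1) (negbTE ht1).
        have -> : b - f i = (b - r) - (f i - r) by ring.
        by rewrite (BE b hb) (BE (f i) fi) /yy; ring.
      by rewrite (lamE t hti); ring.
    have sq0 : \sum_(t < k) q t = 0.
      have : g * \sum_(t < k) q t = 0.
        rewrite mulr_sumr -(eq_bigr _ (fun t _ => hq t)).
        rewrite (eq_bigr (fun t => lam t * h x0 t - lam t * f t)); last by move=> t _; rewrite mulrBr.
        by rewrite sumrB -hzf subrr.
      by move/eqP; rewrite mulf_eq0 (negbTE gne0) => /eqP.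
    move: sq0; rewrite (bigD1 i) //= (bigD1 t1) //=.
    set rest := \sum_(t < k | _) q t => sq0.
    have hrest : (g %| rest)%Z.
      apply: rpred_sum => t /andP [hti htt1].
      rewrite /q (negbTE hti) /h (negbTE htt1).
      apply: dvdz_mull.
      have -> : b - f t = (b - r) - (f t - r) by ring.
      by rewrite rpredB // Bdiv.
    have qi : q i = lam i * (yy b - yy (f i)) by rewrite /q eqxx.
    have qt1 : q t1 = mu t1 * (x0 - f t1) by rewrite /q (negbTE ht1) /h eqxx.
    have hax : (g %| a - x0)%Z.
      rewrite {1}(divz_eq a g) {1}(divz_eq x0 g) x0w /w.
      have -> : (a %/ g)%Z * g + (a %% g)%Z - ((x0 %/ g)%Z * g + (a %% g)%Z) = ((a %/ g)%Z - (x0 %/ g)%Z) * g by ring.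
      exact: dvdz_mull (dvdzz _).
    have := allP hall (yy (f i)) (map_f _ fi); apply/negP; rewrite negbK.
    have -> : lam i * yy b + mu t1 * (a - r) - lam i * yy (f i) =
       (q i + (q t1 + rest)) - rest + mu t1 * ((a - x0) + (f t1 - r)).
      by rewrite qi qt1; ring.
    rewrite sq0 add0r rpredD // ?rpredN // dvdz_mull // rpredD //.
    exact: Bdiv.
  have cardN : card_set N = card_set Aw by rewrite /card_set /N undup_map_inj // size_map.
  have minle : (min_class_size A g <= card_set Aw)%N.
    apply: bigmin_le; rewrite mem_undup; exact: map_f.
  apply: leq_trans (leq_add (leqnn _) minle) _.
  rewrite -cardN /card_set -size_cat; apply: uniq_leq_size.
    rewrite cat_uniq !undup_uniq /= andbT; apply/hasPn => x; rewrite !mem_undup => hx.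
    exact: NT.
  by move=> x; rewrite mem_cat !mem_undup => /orP [/TS|/NS].
left.
pose Q v := exists2 y', y' \in B' & (g %| v - lam i * y')%Z.
pose I s := forall v, Q v -> Q (v + s).
have hstep t a : t != i -> a \in A -> I (mu t * (a - r)).
  move=> ht ha v [y'' /mapP [b hb ->] hv].
  have : ~~ all (fun y' => ~~ (g %| lam i * yy b + mu t * (a - r) - lam i * y')%Z) B'.
    by apply/negP => hall; apply: nBad; exists t; split=> //; exists b => //; exists a.
  case/allPn => y' hy' /negbNE hd; exists y' => //.
  have -> : v + mu t * (a - r) - lam i * y' =
     (v - lam i * ((b - r) %/ g)%Z) + (lam i * yy b + mu t * (a - r) - lam i * y') by rewrite /yy; ring.
  by rewrite rpredD.
have Ig m : I (g * m).
  move=> v [y' hy' hv]; exists y' => //.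
  have -> : v + g * m - lam i * y' = (v - lam i * y') + g * m by ring.
  by rewrite rpredD // dvdz_mulr.
have ID s s' : I s -> I s' -> I (s + s').
  by move=> hs hs' v /hs /hs'; rewrite addrA.
have In s (n : nat) : I s -> I (s * n%:Z).
  move=> hs; elim: n => [|n IHn]; first by rewrite mulr0 -(mulr0 g).
  by rewrite -addn1 PoszD mulrDr mulr1; apply: ID.
have IM s m : I s -> I (s * m).
  move=> hs; have := modz_ge0 m gne0.
  case E: (m %% g)%Z => [n|//] _.
  have -> : s * m = s * n%:Z + g * (s * (m %/ g)%Z).
    by rewrite {1}(divz_eq m g) E; ring.
  by apply: ID; [apply: In | apply: Ig].
have I0 : I 0 by rewrite -(mulr0 g).
have Imu t : t != i -> I (mu t).
  move=> ht.
  pose D := gcdz g (\big[gcdz/0]_(a <- A) (a - r)).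
  have ID' : I (mu t * D).
    apply: (@ideal_gcd (fun x => I (mu t * x))).
    - by rewrite mulr0.
    - by move=> x y hx hy; rewrite mulrDr; apply: ID.
    - by move=> x m hx; rewrite mulrA; apply: IM.
    - by rewrite mulrC; apply: Ig.
    rewrite big_seq; apply: (@ideal_big (fun x => I (mu t * x))).
    - by rewrite mulr0.
    - by move=> x y hx hy; rewrite mulrDr; apply: ID.
    - by move=> x m hx; rewrite mulrA; apply: IM.
    by move=> a ha; apply: hstep.
  suff D1 : D = 1 by move: ID'; rewrite D1 mulr1.
  have D0 : 0 <= D by [].
  have Dn0 : D != 0 by rewrite gcdz_eq0 negb_and gne0.
  have D2 : ~ (2 <= D).
    move=> hD; apply: hred; exists r, D; split=> // x hx.
    apply: dvdz_trans (dvdz_gcdr _ _) _.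
    exact: (@gcd_big_dvd _ A xpredT (fun a => a - r) x hx isT).
  lia.
pose E := \big[gcdz/0]_(t < k | t != i) mu t.
have IE : I E.
  apply: ideal_big; [exact: I0 | exact: ID | exact: IM | exact: Imu].
have E1 : (E %| 1)%Z.
  rewrite -(dvdz_mul2r gne0) mul1r.
  apply: dvd_gcd_big => t ht; rewrite (lamE t ht).
  apply: dvdz_mul (dvdzz _); apply: gcd_big_dvd => //; exact: mem_index_enum.
have I1 : I 1.
  by move: (IM E (1 %/ E)%Z IE); rewrite mulrC divzK.
have Iall m : I m by rewrite -(mul1r m); apply: IM.
case/hasP: hasB => b0 hb0 /eqP hr0.
have b0B : b0 \in B by rewrite mem_filter hr0 eqxx.
have Q0 : Q (lam i * yy b0).
  by exists (yy b0); [apply: map_f | rewrite subrr dvdz0].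
have Qall v : Q v.
  have := Iall (v - lam i * yy b0) _ Q0; by rewrite addrC subrK.
move=> rho; case: (Qall (lam i * rho)) => y' hy' hd; exists y' => //.
rewrite eqz_mod_dvd -rpredN opprB.
rewrite -mulrBr Gauss_dvdzr // in hd.
by rewrite /coprimez gcdzC cop.
Qed.
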